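(* Let $\mathbf{x}_{-1}=(\mathbf{x}_2,\dots,\mathbf{x}_p)$ be a zero-mean Gaussian row vector with covariance $\Sigma_{-1,-1}$ having all diagonal entries $1$ and $\Lambda^2_{\min}(\Sigma_{-1,-1})\gg0$. Fix $S\subset\{2,\dots,p\}$ with cardinality ${\rm s}$ and $\lambda^\sharp>0$. Let $w\in\mathbb{R}^{p-1}$ have strictly positive entries with $\|w\|_\infty\le1$, $W:={\rm diag}(w)$, $c^0\in\arg\min\{\|\Sigma_{-1,-1}^{1/2}c\|_2^2:\lambda^\sharp\|(Wc)_{-S}\|_1=1\}$, and $\zeta_j:=0$ for $j\in S$, $\zeta_j:={\rm sign}(c^0_j)$ for $j\notin S$. Suppose $$1-\big(\lambda^{\sharp2}\|\Sigma_{-1,-1}^{-1/2}W\zeta\|_2^2\big)^{-1}\gg0,\qquad \lambda^{\sharp2}\|\Sigma_{-1,-1}^{-1/2}W\zeta\|_2^2=\mathcal{O}(1).$$ Let $\gamma^\sharp\in\mathbb{R}^{p-1}$ satisfy $\gamma^\sharp_{-S}=0$ and $$0<1-\big(\lambda^{\sharp2}\|\Sigma_{-1,-1}^{-1/2}W\zeta\|_2^2\big)^{-1}-\|\Sigma_{-1,-1}^{1/2}\gamma^\sharp_S\|_2^2\gg0 .$$ Define $\gamma^0\in\mathbb{R}^{p-1}$ by $\gamma^0_{-S}:=c^0_{-S}$ and $\mathbf{x}_{-1}\gamma^0:=\mathbf{x}_S\gamma^\sharp_S+(\mathbf{x}_{-S}-\mathbf{x}_S\Sigma_{S,S}^{-1}\Sigma_{S,-S})\gamma^0_{-S}$.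 Then $\mathbf{x}_S\gamma^\sharp_S$ is the projection of $\mathbf{x}_{-1}\gamma^0$ on $\mathbf{x}_S$. Moreover, if $\lambda^\sharp\sqrt{\rm s}\to0$, the pair $(\gamma^\sharp,\lambda^\sharp)$ is eligible, $\gamma^0$ is allowed, $\lambda^\sharp\|\gamma^0\|_1\not\to0$, and in fact $\|\Sigma_{-1,-1}^{1/2}(\gamma^0-\gamma^\sharp)\|_2^2\gg0$.
   Context: Asymptotic framework: all quantities may depend on $n$; limits as $n\to\infty$. ''$a\gg0$'' means $a$ is strictly positive and bounded away from zero (eventually). Vectors in $\mathbb{R}^{p-1}$ are indexed by $\{2,\dots,p\}$; $-S:=\{2,\dots,p\}\setminus S$; $v_S$, $v_{-S}$ are subvectors (or $v$ with the complementary entries set to zero); $\mathbf{x}_S=\{\mathbf{x}_j\}_{j\in S}$, $\mathbf{x}_{-S}=\{\mathbf{x}_j\}_{j\in-S}$; $\Sigma_{S,S}=\mathbb{E}\mathbf{x}_S^T\mathbf{x}_S$, $\Sigma_{S,-S}=\mathbb{E}\mathbf{x}_S^T\mathbf{x}_{-S}$. A pair $(\gamma^\sharp,\lambda^\sharp)$ is eligible (relative to $\gamma^0$) if $\|\Sigma_{-1,-1}(\gamma^\sharp-\gamma^0)\|_\infty\le\lambda^\sharp$ and $\lambda^\sharp\|\gamma^\sharp\|_1\to0$. A vector $\gamma^0$ is allowed if $\Sigma(\gamma^0):=\begin{pmatrix}1&\gamma^{0T}\Sigma_{-1,-1}\\ \Sigma_{-1,-1}\gamma^0&\Sigma_{-1,-1}\end{pmatrix}$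 is positive definite with $\Lambda^2_{\min}(\Sigma(\gamma^0))\gg0$ and $\|\Sigma_{-1,-1}\gamma^0\|_\infty\le1$. *)

(* Defs.v *)
From HB Require Import structures.
From mathcomp Require Import all_boot all_order all_algebra.
From mathcomp Require Import all_classical all_reals all_analysis.
Set Implicit Arguments. Unset Strict Implicit. Unset Printing Implicit Defensive.
Import Order.TTheory GRing.Theory Num.Theory.
Import numFieldNormedType.Exports.
Local Open Scope ring_scope.
Local Open Scope classical_set_scope.

(* Vectors of R^{p-1} are column vectors 'cV[R]_k with k = p-1; the index
   i : 'I_k stands for the coordinate i+2 in {2,...,p}. *)

Section Defs.
Variable R : realType.

Definition restr k (A : {set 'I_k}) (v : 'cV[R]_k) : 'cV[R]_k :=
  \col_i (if i \in A then v i 0 else 0).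

(* selection matrix P_S : 'M_(#|S|, k), so that P_S *m M *m P_S^T = M_{S,S} *)
Definition selS k (S : {set 'I_k}) : 'M[R]_(#|S|, k) :=
  \matrix_(i, j) (enum_val i == j)%:R.

Definition subSS k (S : {set 'I_k}) (Sig : 'M[R]_k) : 'M[R]_#|S| :=
  selS S *m Sig *m (selS S)^T.

Definition norm1 k (v : 'cV[R]_k) : R := \sum_i `|v i 0|.
Definition normInf k (v : 'cV[R]_k) : R := \big[Num.max/0]_i `|v i 0|.

(* quadratic form u^T M u  (= || M^{1/2} u ||_2^2 for M psd) *)
Definition qf k (M : 'M[R]_k) (u : 'cV[R]_k) : R := (u^T *m M *m u) 0 0.

Definition posdef k (M : 'M[R]_k) : Prop :=
  forall u : 'cV[R]_k, u != 0 -> 0 < qf M u.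
Definition psd k (M : 'M[R]_k) : Prop :=
  forall u : 'cV[R]_k, 0 <= qf M u.

Definition mineig k (M : 'M[R]_k) : R := inf [set a : R | eigenvalue M a].

Definition diagc k (w : 'cV[R]_k) : 'M[R]_k := diag_mx w^T.

Definition SigmaG k (Sig : 'M[R]_k) (g : 'cV[R]_k) : 'M[R]_(1 + k) :=
  block_mx 1%:M (g^T *m Sig) (Sig *m g) Sig.

Definition bdd_away0 (u : nat -> R) : Prop :=
  exists c : R, 0 < c /\ \forall n \near \oo, c <= u n.
Definition bigO1 (u : nat -> R) : Prop :=
  exists C : R, \forall n \near \oo, `|u n| <= C.
Definition to0 (u : nat -> R) : Prop := u @ \oo --> 0.

(* L2 projection for linear combinations of a centred vector x with
   covariance Sig, identifying x u with the coefficient vector u and using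
   E[(x u)(x v)] = u^T Sig v :  x v is the projection of x u on x_S iff
   x v lies in span(x_S) and E[x_S^T (x u - x v)] = 0. *)
Definition is_proj_on k (Sig : 'M[R]_k) (S : {set 'I_k}) (u v : 'cV[R]_k) : Prop :=
  restr S v = v /\ selS S *m Sig *m (u - v) = 0.

(* gamma^0 : gamma^0_{-S} = c0_{-S},
   x gamma^0 = x_S gs_S + (x_{-S} - x_S Sig_SS^{-1} Sig_{S,-S}) c0_{-S} *)
Definition gamma0 k (Sig : 'M[R]_k) (S : {set 'I_k}) (gs c0 : 'cV[R]_k) : 'cV[R]_k :=
  restr (~: S) c0 + restr S gs
  - (selS S)^T *m invmx (subSS S Sig) *m (selS S *m Sig *m restr (~: S) c0).

Definition zeta k (S : {set 'I_k}) (c0 : 'cV[R]_k) : 'cV[R]_k :=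
  \col_j (if j \in S then 0 else Num.sg (c0 j 0)).

Definition is_argmin_c0 k (Sig : 'M[R]_k) (S : {set 'I_k}) (w : 'cV[R]_k)
  (lam : R) (c0 : 'cV[R]_k) : Prop :=
  lam * norm1 (restr (~: S) (diagc w *m c0)) = 1 /\
  forall c : 'cV[R]_k, lam * norm1 (restr (~: S) (diagc w *m c)) = 1 ->
    qf Sig c0 <= qf Sig c.

End Defs.

(* Main.v *)
Require Import Defs.
From HB Require Import structures.
From mathcomp Require Import all_boot all_order all_algebra.
From mathcomp Require Import all_classical all_reals all_analysis.
From mathcomp Require Import ring lra.
Set Implicit Arguments. Unset Strict Implicit. Unset Printing Implicit Defensive.
Import Order.TTheory GRing.Theory Num.Theory.
Import numFieldNormedType.Exports.
Local Open Scope ring_scope.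
Lemma lim0 (R : realType) (D K T : R) : 0 < T ->
  (forall t, `|t| <= T -> t * D <= t ^+ 2 * K) -> D = 0.
Proof.
move=> T0 H; apply/eqP; apply/negPn/negP => D0.
have aD : 0 < `|D| by rewrite normr_gt0.
have K1 : 0 < `|K| + 1 by rewrite ltr_wpDl.
pose tau := Num.min T (`|D| / (`|K| + 1)).
have tau0 : 0 < tau by rewrite /tau lt_min T0 divr_gt0.
have tauT : tau <= T by rewrite /tau ge_min lexx.
have tauD : tau * (`|K| + 1) <= `|D|.
  rewrite -ler_pdivlMr //; by rewrite /tau ge_min lexx orbT.
have h1 : `|Num.sg D * tau| <= T.
  by rewrite normrM normr_sg D0 mul1r ger0_norm // ltW.
have := H _ h1.
rewrite exprMn sqr_sg D0 mul1r -mulrA (mulrC tau) mulrA -normrEsg => h.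
have hK : K <= `|K| := ler_norm K.
nra.
Qed.
Section Vec.
Variable R : realType.
Definition ssq k (v : 'cV[R]_k) : R := \sum_i v i 0 ^+ 2.
Definition ej k (j : 'I_k) : 'cV[R]_k := delta_mx j 0.

Lemma mx11_tr (A : 'M[R]_1) : A^T 0 0 = A 0 0.
Proof. by rewrite mxE. Qed.

Lemma add00 (A B : 'M[R]_1) : (A + B) 0 0 = A 0 0 + B 0 0.
Proof. by rewrite mxE. Qed.
Lemma scale00 (a : R) (A : 'M[R]_1) : (a *: A) 0 0 = a * A 0 0.
Proof. by rewrite mxE. Qed.

Lemma ejTM k j (M : 'M[R]_(k, k)) (u : 'cV[R]_k) :
  ((ej j)^T *m M *m u) 0 0 = (M *m u) j 0.
Proof. by rewrite /ej trmx_delta -rowE -row_mul mxE. Qed.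

Lemma qf_add_ej k (M : 'M[R]_k) (u : 'cV[R]_k) (t : R) j : M^T = M ->
  qf M (u + t *: ej j) = qf M u + 2 * t * (M *m u) j 0 + t ^+ 2 * M j j.
Proof.
move=> sM.
have h1 : (u^T *m M *m ej j) 0 0 = (M *m u) j 0.
  by rewrite -mx11_tr !trmx_mul trmxK sM mulmxA ejTM.
have h2 : ((ej j)^T *m M *m ej j) 0 0 = M j j.
  by rewrite ejTM /ej -colE mxE.
have h3 := ejTM j M u.
rewrite /qf [(u + _)^T]linearD /= [(_ *: _)^T]linearZ /= !mulmxDl !mulmxDr.
rewrite -!scalemxAl -!scalemxAr.
rewrite !add00 !scale00.
rewrite h1 h2 h3; move: ((u^T *m M *m u) 0 0) ((M *m u) j 0) (M j j) => x y z. ring.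
Qed.

Lemma ssq_add_ej k (u : 'cV[R]_k) (t : R) j :
  ssq (u + t *: ej j) = ssq u + 2 * t * u j 0 + t ^+ 2.
Proof.
rewrite /ssq.
have -> : \sum_i (u + t *: ej j) i 0 ^+ 2 =
   \sum_i (u i 0 ^+ 2 + (i == j)%:R * (2 * t * u j 0 + t ^+ 2)).
  apply: eq_bigr => i _; rewrite !mxE /ej eqxx andbT.
  case: eqP => [->|_]; rewrite ?mulr1 ?mulr0 ?addr0 ?mul1r ?mul0r //; ring.
rewrite big_split /= -addrA; congr (_ + _).
rewrite (bigD1 j) //= ?eqxx ?mul1r big1 ?addr0 // => i /negbTE ->; by rewrite mul0r.
Qed.
End Vec.
Section EL.
Local Open Scope classical_set_scope.
Variable R : realType.

Lemma qfZ k (M : 'M[R]_k) (a : R) v : qf M (a *: v) = a ^+ 2 * qf M v.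
Proof.
rewrite /qf [(_ *: _)^T]linearZ /= -!scalemxAl -scalemxAr.
by rewrite !scale00 mulrA -expr2.
Qed.

Lemma ssqZ k (a : R) (v : 'cV[R]_k) : ssq (a *: v) = a ^+ 2 * ssq v.
Proof. by rewrite /ssq mulr_sumr; apply: eq_bigr => i _; rewrite mxE exprMn. Qed.

Lemma ssq_ge0 k (v : 'cV[R]_k) : 0 <= ssq v.
Proof. by apply: sumr_ge0 => i _; exact: sqr_ge0. Qed.

Lemma ssq_eq0 k (v : 'cV[R]_k) : ssq v = 0 -> v = 0.
Proof.
move=> /eqP; rewrite psumr_eq0 => [/allP h|i _]; last exact: sqr_ge0.
apply/matrixP => i j; rewrite (ord1 j) mxE.
by have := h i (mem_index_enum i); rewrite /= sqrf_eq0 => /eqP.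
Qed.

Lemma qf0 k (M : 'M[R]_k) : qf M 0 = 0.
Proof. by rewrite /qf mulmx0 mxE. Qed.

Definition qfr k (M : 'M[R]_k) (x : 'rV[R]_k) : R :=
  \sum_l (\sum_i x 0 i * M i l) * x 0 l.
Definition ssqr k (x : 'rV[R]_k) : R := \sum_i x 0 i ^+ 2.

Lemma qfrE k (M : 'M[R]_k) x : qfr M x = qf M x^T.
Proof.
rewrite /qfr /qf trmxK mxE; apply: eq_bigr => l _; rewrite !mxE.
by congr (_ * _); apply: eq_bigr => i _; rewrite mxE.
Qed.

Lemma ssqrE k (x : 'rV[R]_k) : ssqr x = ssq x^T.
Proof. by apply: eq_bigr => i _; rewrite mxE. Qed.

Lemma qfr_cont k (M : 'M[R]_k) : continuous (qfr M).
Proof.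
rewrite /qfr; apply: continuous_big; first exact: add_continuous.
move=> l _ x.
apply: (@continuousM _ _ (fun x : 'rV[R]_k => \sum_i x 0 i * M i l) (fun x => x 0 l)); last exact: coord_continuous.
move: x; apply: continuous_big; first exact: add_continuous.
move=> i _ x.
apply: (@continuousM _ _ (fun x : 'rV[R]_k => x 0 i) (fun=> M i l)); first exact: coord_continuous.
exact: cst_continuous.
Qed.

Lemma ssqr_cont k : continuous (@ssqr k).
Proof.
rewrite /ssqr; apply: continuous_big; first exact: add_continuous.
move=> i _ x; rewrite /GRing.exp /=.
by apply: (@continuousM _ _ (fun x : 'rV[R]_k => x 0 i) (fun x => x 0 i)); exact: coord_continuous.
Qed.

Lemma rayleigh_min k (M : 'M[R]_k) : (0 < k)%N ->
  exists u : 'cV[R]_k, ssq u = 1 /\ forall v, qf M u * ssq v <= qf M v.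
Proof.
move=> k0.
pose A := [set x : 'rV[R]_k | ssqr x = 1].
have A0 : A !=set0.
  exists (delta_mx 0 (Ordinal k0)); rewrite /A /= /ssqr (bigD1 (Ordinal k0)) //=.
  rewrite mxE !eqxx /= expr1n big1 ?addr0 // => i /negbTE ni.
  by rewrite mxE ni andbF expr0n.
have cA : compact A.
  apply: bounded_closed_compact.
    exists 1; split; first by rewrite num_real.
    move=> M1 M1gt x Ax; rewrite /Num.Def.normr /= mx_normrE; apply/bigmax_leP; split; first by apply: le_trans (ltW M1gt).
    move=> [i j] _ /=; rewrite (ord1 i).
    apply: (le_trans _ (ltW M1gt)).
    have : x 0 j ^+ 2 <= 1.
      rewrite -Ax /ssqr (bigD1 j) //= lerDl; apply: sumr_ge0 => l _; exact: sqr_ge0.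
    by rewrite -real_normK ?num_real // expr_le1 ?normr_ge0.
  have -> : A = (@ssqr k) @^-1` [set x | x = 1] by [].
  by move: (ssqr_cont (k:=k)) => /continuous_closedP; apply; exact: closed_eq.
have [c cAc cmin] := EVT_min_rV A0 cA (continuous_subspaceT (@qfr_cont k M)).
exists c^T; split; first by rewrite -ssqrE; move: cAc; rewrite inE.
move=> v.
have [->|v0] := eqVneq v 0.
  by rewrite qf0 /ssq big1 ?mulr0 // => i _; rewrite mxE expr0n.
have sp : 0 < ssq v.
  rewrite lt_neqAle ssq_ge0 andbT; apply/eqP => h; move: v0.
  by rewrite (ssq_eq0 (esym h)) eqxx.
pose y := ((Num.sqrt (ssq v))^-1 *: v).
have sq : (Num.sqrt (ssq v))^-1 ^+ 2 = (ssq v)^-1.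
  by rewrite exprVn sqr_sqrtr // ltW.
have yA : y^T \in A.
  by rewrite inE /A /= ssqrE trmxK ssqZ sq mulVf // gt_eqF.
have := cmin _ yA; rewrite !qfrE trmxK qfZ sq => h.
by rewrite -ler_pdivlMr // mulrC.
Qed.

Lemma EL k (M : 'M[R]_k) : (0 < k)%N -> M^T = M ->
  exists u, ssq u = 1 /\ qf M u = mineig M /\
    forall v, mineig M * ssq v <= qf M v.
Proof.
move=> k0 sM; have [u [u1 umin]] := rayleigh_min M k0.
set mu := qf M u.
have eig : M *m u = mu *: u.
  apply/matrixP => j z; rewrite (ord1 z) [RHS]mxE.
  suff : 2 * (mu * u j 0 - (M *m u) j 0) = 0.
    by move/eqP; rewrite mulf_eq0 pnatr_eq0 /= subr_eq0 => /eqP ->.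
  apply: (@lim0 _ _ (M j j - mu) 1 ltr01) => t _.
  have := umin (u + t *: ej R j).
  rewrite qf_add_ej // ssq_add_ej u1 -/mu => h.
  set a := (M *m u) j 0 in h *; set b := u j 0 in h *; nra.
have ne : u != 0.
  apply/eqP => u0; move: u1; rewrite u0 /ssq big1 => [/eqP|i _].
    by rewrite eq_sym oner_eq0.
  by rewrite mxE expr0n.
have Emu : eigenvalue M mu.
  apply/eigenvalueP; exists u^T; last by rewrite trmx_eq0.
  by rewrite -{1}sM -trmx_mul eig linearZ.
have lb : forall a, eigenvalue M a -> mu <= a.
  move=> a /eigenvalueP [v va v0].
  have sv : 0 < ssq v^T.
    rewrite lt_neqAle ssq_ge0 andbT; apply/eqP => h.
    by move: v0; rewrite -trmx_eq0 (ssq_eq0 (esym h)) eqxx.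
  have := umin v^T; rewrite /qf trmxK va -scalemxAl scale00.
  have -> : (v *m v^T) 0 0 = ssq v^T.
    by rewrite mxE; apply: eq_bigr => i _; rewrite !mxE expr2.
  by rewrite ler_pM2r.
have -> : mineig M = mu.
  apply/eqP; rewrite eq_le; apply/andP; split.
    by apply: ge_inf => //; exists mu => x; apply: lb.
  by apply: lb_le_inf; [exists mu | move=> x; apply: lb].
by exists u.
Qed.
End EL.

Section Ent.
Variable R : realType.

Lemma restrE k (A : {set 'I_k}) (v : 'cV[R]_k) i : restr A v i 0 = if i \in A then v i 0 else 0.
Proof. by rewrite mxE. Qed.

Lemma diagcE k (w c : 'cV[R]_k) i : (diagc w *m c) i 0 = w i 0 * c i 0.
Proof. by rewrite /diagc mul_diag_mx !mxE. Qed.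

Lemma sum_delta k (F : 'I_k -> R) j : \sum_i (i == j)%:R * F i = F j.
Proof.
rewrite (bigD1 j) //= eqxx mul1r big1 ?addr0 // => i /negbTE ->; by rewrite mul0r.
Qed.

Lemma selSE k (S : {set 'I_k}) (M : 'cV[R]_k) i : (selS R S *m M) i 0 = M (enum_val i) 0.
Proof.
rewrite mxE -(sum_delta (fun j => M j 0) (enum_val i)).
by apply: eq_bigr => j _; rewrite mxE eq_sym.
Qed.

Lemma selSTE k (S : {set 'I_k}) (y : 'cV[R]_#|S|) i : i \notin S -> ((selS R S)^T *m y) i 0 = 0.
Proof.
move=> iS; rewrite mxE big1 // => l _; rewrite !mxE.
case: eqP => [e|]; last by rewrite mul0r.
by move: iS; rewrite -e enum_valP.
Qed.

Lemma selS_col k (S : {set 'I_k}) (M : 'cV[R]_k) : selS R S *m M = 0 ->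
  forall i, i \in S -> M i 0 = 0.
Proof.
move=> h i iS; rewrite -(enum_rankK_in iS iS) -selSE h mxE //.
Qed.

Lemma selS_col' k (S : {set 'I_k}) (M : 'cV[R]_k) : (forall i, i \in S -> M i 0 = 0) ->
  selS R S *m M = 0.
Proof.
move=> h; apply/matrixP => i z; rewrite (ord1 z) selSE mxE; apply: h; exact: enum_valP.
Qed.

Lemma norm1_ge0 k (v : 'cV[R]_k) : 0 <= norm1 v.
Proof. by apply: sumr_ge0 => i _; exact: normr_ge0. Qed.

Lemma abs_sg (x t : R) : `|x| + Num.sg x * t <= `|x + t|.
Proof.
have [x0|x0|->] := ltgtP x 0.
- rewrite ltr0_sg // ltr0_norm // mulN1r -opprD -normrN; exact: ler_norm.
- by rewrite gtr0_sg // gtr0_norm // mul1r ler_norm.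
- by rewrite sgr0 normr0 mul0r !add0r.
Qed.

Lemma qf_ge0 k (M : 'M[R]_k) v : posdef M -> 0 <= qf M v.
Proof.
move=> pd; have [->|v0] := eqVneq v 0; first by rewrite qf0.
exact/ltW/pd.
Qed.

Lemma qf_eq0 k (M : 'M[R]_k) v : posdef M -> qf M v = 0 -> v = 0.
Proof.
move=> pd h; apply/eqP/negPn/negP => v0.
by have := pd _ v0; rewrite h ltxx.
Qed.

Lemma posdef_unit k (M : 'M[R]_k) : M^T = M -> posdef M -> M \in unitmx.
Proof.
move=> sM pd; rewrite -row_free_unit -kermx_eq0; apply/negPn/negP.
case/matrix0Pn => i [j nz].
set v := row i (kermx M).
have vM : v *m M = 0 by rewrite /v -row_mul mulmx_ker row0.
have v0 : v^T != 0.
  rewrite trmx_eq0; apply/matrix0Pn; exists 0, j; by rewrite /v mxE.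
have := pd _ v0; by rewrite /qf trmxK vM mul0mx mxE ltxx.
Qed.

End Ent.

Section Core.
Variable R : realType.
Variables (k : nat) (Sig : 'M[R]_k) (S : {set 'I_k}) (lam : R) (w c0 : 'cV[R]_k).
Hypotheses (sS : Sig^T = Sig) (pd : posdef Sig) (d1 : forall i, Sig i i = 1)
  (lam0 : 0 < lam) (w0 : forall i, 0 < w i 0) (w1 : normInf w <= 1)
  (am : is_argmin_c0 Sig S w lam c0).

Definition NN (c : 'cV[R]_k) := norm1 (restr (~: S) (diagc w *m c)).

Lemma NN0 : lam * NN c0 = 1.
Proof. by case: am. Qed.

Lemma k_gt0 : (0 < k)%N.
Proof.
case: (posnP k) => [k0|//]; have := NN0.
rewrite /NN /norm1 big1 ?mulr0 => [/eqP|i]; first by rewrite eq_sym oner_eq0.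
have h := ltn_ord i; move: h; by rewrite [X in (_ < X)%N]k0.
Qed.

Lemma m_gt0 : 0 < qf Sig c0.
Proof.
apply: pd; apply/eqP => c00; have := NN0.
rewrite /NN c00 mulmx0 /norm1 big1 ?mulr0 => [/eqP|i _]; first by rewrite eq_sym oner_eq0.
by rewrite restrE mxE if_same normr0.
Qed.

Lemma wle1 i : w i 0 <= 1.
Proof.
apply: le_trans w1; rewrite /normInf -(gtr0_norm (w0 i)).
exact: (le_bigmax _ (fun i => `|w i 0|) i).
Qed.

Lemma zeta_bd j : `|zeta S c0 j 0| <= 1.
Proof.
rewrite mxE; case: ifP => _; first by rewrite normr0 ler01.
by rewrite normr_sg; case: (_ != 0); rewrite ?lexx ?ler01.
Qed.

Lemma NNscale (a : R) c : 0 <= a -> NN (a *: c) = a * NN c.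
Proof.
move=> a0; rewrite /NN /norm1 mulr_sumr; apply: eq_bigr => i _.
rewrite !restrE !diagcE; case: ifP => _; last by rewrite normr0 mulr0.
by rewrite mxE mulrCA normrM ger0_norm.
Qed.

Lemma NN_lb j t : NN c0 + w j 0 * zeta S c0 j 0 * t <= NN (c0 + t *: ej R j).
Proof.
rewrite /NN /norm1 -(sum_delta (fun i => w i 0 * zeta S c0 i 0 * t) j) -big_split /=.
apply: ler_sum => i _; rewrite !restrE !diagcE !mxE.
case: eqP => [->|ne]; last first.
  by rewrite /= mulr0 addr0 mul0r addr0.
rewrite /= mul1r mulr1.
case: (boolP (j \in S)) => inS; rewrite inE inS /=.
  by rewrite normr0 mulr0 mul0r addr0.
rewrite !normrM (gtr0_norm (w0 j)) -mulrA -mulrDr ler_pM2l //; exact: abs_sg.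
Qed.

Lemma Sc0 j : (Sig *m c0) j 0 = lam * qf Sig c0 * (w j 0 * zeta S c0 j 0).
Proof.
set m := qf Sig c0; set a := (Sig *m c0) j 0; set z := zeta S c0 j 0.
set b := lam * (w j 0 * z).
have m0 : 0 < m := m_gt0.
have wj0 := w0 j; have wj1 := wle1 j; have zb := zeta_bd j.
suff : 2 * (m * b - a) = 0.
  by move/eqP; rewrite mulf_eq0 pnatr_eq0 /= subr_eq0 => /eqP <-; rewrite /b mulrCA mulrA.
have Z0 : 0 < 2 * (lam * w j 0 + 1).
  by rewrite mulr_gt0 // ltr_wpDl // mulr_ge0 // ltW.
have T0 : 0 < (2 * (lam * w j 0 + 1))^-1 by rewrite invr_gt0.
apply: (lim0 (K := 1 - m * b ^+ 2) T0) => t ht.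
have htT : `|t| * (2 * (lam * w j 0 + 1)) <= 1.
  by rewrite -ler_pdivlMr // mul1r.
have bb : `|b| <= lam * w j 0.
  rewrite /b !normrM (gtr0_norm lam0) (gtr0_norm wj0) -[X in _ <= X]mulr1.
  by rewrite mulrA ler_pM2l ?mulr_gt0.
have bt : -(1/2) <= b * t.
  have h1 : `|b * t| <= 1/2.
    rewrite normrM; have := normr_ge0 t; have := normr_ge0 b.
    move: htT bb; set x := lam * w j 0; move: (mulr_gt0 lam0 wj0); rewrite -/x => x0.
    move=> h1 h2 h3 h4; nra.
  by move: h1; rewrite ler_norml => /andP [].
set Nt := NN (c0 + t *: ej R j).
have hN : 1 + b * t <= lam * Nt.
  have := NN_lb j t; rewrite -/Nt -(ler_pM2l lam0) mulrDr NN0.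
  by rewrite /b -/z !mulrA.
have Nt0 : 0 < lam * Nt by apply: lt_le_trans hN; lra.
set kap := (lam * Nt)^-1.
have kap0 : 0 < kap by rewrite invr_gt0.
have cons : lam * NN (kap *: (c0 + t *: ej R j)) = 1.
  by rewrite NNscale ?ltW // -/Nt /kap mulrCA mulVf ?gt_eqF.
have := (proj2 am) _ cons; rewrite -/m qfZ qf_add_ej // d1 -/a => h.
have hk : kap ^+ 2 * (lam * Nt) ^+ 2 = 1 by rewrite -exprMn mulVf ?gt_eqF // expr1n.
have h2 : m * (lam * Nt) ^+ 2 <= m + 2 * t * a + t ^+ 2 * 1.
  have := ler_wpM2r (ltW (exprn_gt0 2 Nt0)) h; by rewrite mulrAC hk mul1r.
have h3 : (1 + b * t) ^+ 2 <= (lam * Nt) ^+ 2.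
  by rewrite ler_sqr ?nnegrE //; lra.
nra.
Qed.

End Core.

Section SG.
Variable R : realType.
Definition bil k (M : 'M[R]_k) (x y : 'cV[R]_k) : R := (x^T *m M *m y) 0 0.

Lemma bil_sym k (M : 'M[R]_k) x y : M^T = M -> bil M x y = bil M y x.
Proof. by move=> sM; rewrite /bil -mx11_tr !trmx_mul trmxK sM mulmxA. Qed.

Lemma qfD k (M : 'M[R]_k) x y : M^T = M ->
  qf M (x + y) = qf M x + 2 * bil M x y + qf M y.
Proof.
move=> sM; rewrite /qf [(x + y)^T]linearD /= !mulmxDl !mulmxDr !add00.
rewrite -/(bil M x y) -/(bil M y x) (bil_sym x y sM); rewrite /bil; ring.
Qed.

Lemma bilZl k (M : 'M[R]_k) a x y : bil M (a *: x) y = a * bil M x y.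
Proof. by rewrite /bil [(_ *: _)^T]linearZ /= -!scalemxAl scale00. Qed.

Lemma qf_SigmaG k (Sig : 'M[R]_k) (g : 'cV[R]_k) (u : 'cV[R]_(1 + k)) : Sig^T = Sig ->
  qf (SigmaG Sig g) u =
  qf Sig ((usubmx u) 0 0 *: g + dsubmx u) + (usubmx u) 0 0 ^+ 2 * (1 - qf Sig g).
Proof.
move=> sM; rewrite -[u]vsubmxK col_mxKu col_mxKd.
set a := usubmx u; set v := dsubmx u; rewrite [a]mx11_scalar; set al := a 0 0.
rewrite qfD // qfZ bilZl /qf /SigmaG tr_col_mx tr_scalar_mx mul_row_block mul_row_col.
rewrite !mul_scalar_mx !mul_mx_scalar !add00 !scale00 mulmxDl -scalemxAl !add00 !scale00.
have sc : forall b : R, (b%:M : 'M[R]_1) 0 0 = b by move=> b; rewrite mxE eqxx mulr1n.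
rewrite !sc.
have e1 : (v^T *m (Sig *m g)) 0 0 = bil Sig g v by rewrite bil_sym // /bil mulmxA.
have e2 : (g^T *m Sig *m v) 0 0 = bil Sig g v by [].
rewrite e1 e2 -/(qf Sig v) -/(qf Sig g) /qf; ring.
Qed.
End SG.

Section Core2.
Variable R : realType.
Variables (k : nat) (Sig : 'M[R]_k) (S : {set 'I_k}) (lam : R) (w c0 gs : 'cV[R]_k).
Hypotheses (sS : Sig^T = Sig) (pd : posdef Sig) (d1 : forall i, Sig i i = 1)
  (lam0 : 0 < lam) (w0 : forall i, 0 < w i 0) (w1 : normInf w <= 1)
  (am : is_argmin_c0 Sig S w lam c0) (hgs : restr (~: S) gs = 0).

Let m := qf Sig c0.
Let Sc0' j : (Sig *m c0) j 0 = lam * m * (w j 0 * zeta S c0 j 0) :=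
  Sc0 sS pd d1 lam0 w0 w1 am j.

Lemma Sc0S i : i \in S -> (Sig *m c0) i 0 = 0.
Proof. by move=> iS; rewrite Sc0' mxE iS mulr0 mulr0. Qed.

Lemma gs_out i : i \notin S -> gs i 0 = 0.
Proof. by move=> iS; have := congr1 (fun M : 'cV[R]_k => M i 0) hgs; rewrite /= restrE inE iS mxE. Qed.

Lemma gsS : restr S gs = gs.
Proof.
apply/matrixP => i z; rewrite (ord1 z) restrE; case: ifP => // /negbT iS.
by rewrite gs_out.
Qed.

Lemma Q_eq : lam ^+ 2 * qf (invmx Sig) (diagc w *m zeta S c0) = m^-1.
Proof.
have m0 : 0 < m := m_gt0 pd am.
have e : diagc w *m zeta S c0 = (lam * m)^-1 *: (Sig *m c0).
  apply/matrixP => j z; rewrite (ord1 z) diagcE [RHS]mxE Sc0'; field.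
  by rewrite !gt_eqF.
have u := posdef_unit sS pd.
rewrite e qfZ /qf -mulmxA mulKmx // trmx_mul sS -/(qf Sig c0) -/m.
rewrite exprVn; field; by rewrite !gt_eqF.
Qed.

Lemma selST_ne0 (u : 'cV[R]_#|S|) : u != 0 -> (selS R S)^T *m u != 0.
Proof.
case/matrix0Pn => i [z]; rewrite (ord1 z) => ui.
apply/matrix0Pn; exists (enum_val i), 0.
suff -> : ((selS R S)^T *m u) (enum_val i) 0 = u i 0 by [].
rewrite mxE -(sum_delta (fun l => u l 0) i); apply: eq_bigr => l _.
by rewrite !mxE (inj_eq enum_val_inj).
Qed.

Lemma subSS_unit : Defs.subSS S Sig \in unitmx.
Proof.
apply: posdef_unit.
  by rewrite /Defs.subSS !trmx_mul trmxK sS mulmxA.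
move=> u u0; have := pd (selST_ne0 u0).
by rewrite /qf /Defs.subSS trmx_mul trmxK !mulmxA.
Qed.

Let g0 := gamma0 Sig S gs c0.

Lemma addcE (A B : 'cV[R]_k) i : (A + B) i 0 = A i 0 + B i 0.
Proof. by rewrite mxE. Qed.
Lemma subcE (A B : 'cV[R]_k) i : (A - B) i 0 = A i 0 - B i 0.
Proof. by rewrite !mxE. Qed.

Lemma proj_part : selS R S *m Sig *m (g0 - restr S gs) = 0.
Proof.
rewrite /g0 /gamma0 addrAC addrK mulmxBr.
rewrite !mulmxA -[selS R S *m Sig *m (selS R S)^T]/(Defs.subSS S Sig).
by rewrite mulmxV ?subSS_unit // mul1mx subrr.
Qed.

Lemma proj : is_proj_on Sig S g0 (restr S gs).
Proof.
split; last exact: proj_part.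
by apply/matrixP => i z; rewrite !mxE; case: (i \in S).
Qed.

Lemma g0E : g0 = c0 + gs.
Proof.
set v := g0 - gs - c0.
suff v0 : v = 0.
  by move/eqP: v0; rewrite subr_eq0 subr_eq => /eqP ->; rewrite addrC.
have vout i : i \notin S -> v i 0 = 0.
  move=> iS; rewrite /v /g0 /gamma0 !subcE addcE -[(selS R S)^T *m _ *m _]mulmxA (selSTE _ iS) !restrE inE iS gs_out //.
  by rewrite if_same !subr0 addrC addKr.
have Sv : selS R S *m (Sig *m v) = 0.
  rewrite /v mulmxBr mulmxBr -gsS mulmxA proj_part.
  rewrite (selS_col' (M := Sig *m c0)) ?subrr //; exact: Sc0S.
have vin := selS_col Sv.
apply: (qf_eq0 pd); rewrite /qf -mulmxA mxE big1 // => i _.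
rewrite mxE; case: (boolP (i \in S)) => iS; first by rewrite vin // mulr0.
by rewrite vout // mul0r.
Qed.

Lemma cross0 : bil Sig c0 gs = 0.
Proof.
rewrite bil_sym // /bil -mulmxA mxE big1 // => i _.
rewrite mxE; case: (boolP (i \in S)) => iS; first by rewrite Sc0S // mulr0.
by rewrite gs_out // mul0r.
Qed.

Lemma qf_g0 : qf Sig (c0 + gs) = m + qf Sig gs.
Proof. by rewrite qfD // cross0 mulr0 addr0. Qed.

Lemma normInf_le (v : 'cV[R]_k) b : 0 <= b -> (forall i, `|v i 0| <= b) -> normInf v <= b.
Proof. by move=> b0 h; apply/bigmax_leP; split. Qed.

Lemma CS_ej (g : 'cV[R]_k) j : (Sig *m g) j 0 ^+ 2 <= qf Sig g.
Proof.
have := qf_ge0 (g + (- (Sig *m g) j 0) *: ej R j) pd.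
rewrite qf_add_ej // d1; lra.
Qed.

Lemma Sg_bound (g : 'cV[R]_k) : qf Sig g <= 1 -> normInf (Sig *m g) <= 1.
Proof.
move=> h; apply: normInf_le => // i.
have := le_trans (CS_ej g i) h.
by rewrite -real_normK ?num_real // expr_le1.
Qed.

Lemma elig_bound : normInf (Sig *m (gs - (c0 + gs))) <= lam * m.
Proof.
have m0 : 0 < m := m_gt0 pd am.
apply: normInf_le; first by rewrite mulr_ge0 // ltW.
move=> i; rewrite opprD addrCA subrr addr0 mulmxN mxE normrN Sc0' normrM.
have h1 : `|w i 0 * zeta S c0 i 0| <= 1.
  rewrite normrM (gtr0_norm (w0 i)) -[1]mulr1.
  by apply: ler_pM; [exact: ltW | exact: normr_ge0 | exact: wle1 | exact: zeta_bd].
have lm0 : 0 <= lam * m by rewrite mulr_ge0 // ltW.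
by rewrite (ger0_norm lm0); have := ler_wpM2l lm0 h1; rewrite mulr1.
Qed.

Lemma norm1_g0 : 1 <= lam * norm1 (c0 + gs).
Proof.
rewrite -(NN0 am) ler_pM2l //; apply: ler_sum => i _.
rewrite restrE diagcE mxE; case: (boolP (i \in S)) => iS; rewrite inE iS /=.
  by rewrite normr0 normr_ge0.
rewrite gs_out // addr0 normrM (gtr0_norm (w0 i)) -[X in _ <= X]mul1r.
by rewrite ler_wpM2r ?normr_ge0 // wle1.
Qed.

End Core2.

Section Core3.
Variable R : realType.

Lemma ssq_col k (u : 'cV[R]_(1 + k)) : ssq u = (usubmx u) 0 0 ^+ 2 + ssq (dsubmx u).
Proof.
rewrite /ssq big_split_ord /= big_ord1; congr (_ + _); first by rewrite mxE.
by apply: eq_bigr => i _; rewrite mxE.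
Qed.

Lemma u_ne0 k (u : 'cV[R]_(1 + k)) : u != 0 -> (usubmx u) 0 0 != 0 \/ dsubmx u != 0.
Proof.
move=> u0; case: (eqVneq ((usubmx u) 0 0) 0) => a0; last by left.
case: (eqVneq (dsubmx u) 0) => v0; last by right.
move: u0; rewrite -[u]vsubmxK v0 (mx11_scalar (usubmx u)) a0.
by rewrite -scalemx1 scale0r col_mx0 eqxx.
Qed.

Lemma SigG_posdef k (Sig : 'M[R]_k) g : Sig^T = Sig -> posdef Sig -> qf Sig g < 1 ->
  posdef (SigmaG Sig g).
Proof.
move=> sS pd g1 u u0; rewrite qf_SigmaG //.
have h1 := qf_ge0 ((usubmx u) 0 0 *: g + dsubmx u) pd.
case: (eqVneq ((usubmx u) 0 0) 0) => [a0|a0].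
  rewrite a0 scale0r add0r expr0n mul0r addr0; apply: pd.
  by case: (u_ne0 u0) => //; rewrite a0 eqxx.
have h2 : 0 < (usubmx u) 0 0 ^+ 2 * (1 - qf Sig g).
  by rewrite mulr_gt0 // ?exprn_even_gt0 // subr_gt0.
lra.
Qed.

Lemma ssqD_le k (x y : 'cV[R]_k) : ssq (x + y) <= 2 * ssq x + 2 * ssq y.
Proof.
rewrite /ssq !mulr_sumr -big_split /=; apply: ler_sum => i _; rewrite mxE.
have := sqr_ge0 (x i 0 - y i 0); nra.
Qed.

Lemma SigG_lb k (Sig : 'M[R]_k) g (L c2 : R) : Sig^T = Sig -> posdef Sig ->
  0 < L -> L <= 1 -> (forall v, L * ssq v <= qf Sig v) -> 0 < c2 -> c2 <= 1 - qf Sig g ->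
  forall u, (L * c2 / 4) * ssq u <= qf (SigmaG Sig g) u.
Proof.
move=> sS pd L0 L1 coer c20 c2d u.
rewrite qf_SigmaG // ssq_col.
set al := (usubmx u) 0 0; set v := dsubmx u; set X := ssq (al *: g + v).
have qg1 : qf Sig g <= 1 by have := qf_ge0 g pd; lra.
have sg : L * ssq g <= 1 by apply: le_trans (coer g) qg1.
have hv : ssq v <= 2 * X + 2 * (al ^+ 2 * ssq g).
  have -> : v = (al *: g + v) + (- al) *: g by rewrite scaleNr addrAC subrr add0r.
  by apply: le_trans (ssqD_le _ _) _; rewrite ssqZ sqrrN -/X.
have hX := coer (al *: g + v); rewrite -/X in hX.
have A0 : 0 <= al ^+ 2 := sqr_ge0 al.
have X0 : 0 <= X := ssq_ge0 _.
have V0 : 0 <= ssq v := ssq_ge0 _.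
have G0 : 0 <= ssq g := ssq_ge0 _.
have hv2 : L * ssq v <= 2 * (L * X) + 2 * al ^+ 2.
  have := ler_wpM2l (ltW L0) hv; move: sg; nra.
have hd : c2 * al ^+ 2 <= al ^+ 2 * (1 - qf Sig g) by rewrite mulrC ler_wpM2l.
have c21 : c2 <= 1 by have := qf_ge0 g pd; lra.
have p1 := ler_wpM2l (ltW c20) hv2.
have p2 : L * (c2 * al ^+ 2) <= c2 * al ^+ 2.
  by rewrite -[X in _ <= X]mul1r ler_wpM2r // mulr_ge0 // ltW.
have p3 : c2 * (L * X) <= L * X.
  by rewrite -[X in _ <= X]mul1r ler_wpM2r // mulr_ge0 // ltW.
nra.
Qed.

Lemma coer_le1 k (Sig : 'M[R]_k) (L : R) : Sig^T = Sig -> (0 < k)%N ->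
  (forall i, Sig i i = 1) -> (forall v, L * ssq v <= qf Sig v) -> L <= 1.
Proof.
move=> sS k0 d1 coer; pose j := Ordinal k0.
have := coer (0 + 1 *: ej R j); rewrite qf_add_ej // ssq_add_ej d1 qf0.
rewrite /ssq big1 => [|i _]; last by rewrite mxE expr0n.
by rewrite mulmx0 !mxE !mulr0 !add0r expr1n !mulr1.
Qed.

Lemma SigG_sym k (Sig : 'M[R]_k) g : Sig^T = Sig -> (SigmaG Sig g)^T = SigmaG Sig g.
Proof.
by move=> sS; rewrite /SigmaG tr_block_mx tr_scalar_mx !trmx_mul trmxK sS.
Qed.

Lemma norm1_bound k (S : {set 'I_k}) (x : 'cV[R]_k) : (forall i, i \notin S -> x i 0 = 0) ->
  norm1 x <= Num.sqrt (#|S|%:R) / 2 * (1 + ssq x).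
Proof.
move=> xS; set r := Num.sqrt (#|S|%:R).
have r0 : 0 <= r := sqrtr_ge0 _.
have ssqS : \sum_(i in S) x i 0 ^+ 2 <= ssq x.
  rewrite /ssq [X in _ <= X](bigID (fun i => i \in S)) /= lerDl.
  by apply: sumr_ge0 => i _; exact: sqr_ge0.
have n1 : norm1 x = \sum_(i in S) `|x i 0|.
  rewrite /norm1 (bigID (fun i => i \in S)) /= [X in _ + X]big1 ?addr0 // => i iS.
  by rewrite xS ?normr0.
rewrite n1.
case: (posnP #|S|) => [s0|s0].
  rewrite big1 ?mulr_ge0 ?divr_ge0 ?addr_ge0 ?ssq_ge0 // => i iS.
  by move: s0; move/eqP; rewrite cards_eq0 => /eqP S0; move: iS; rewrite S0 inE.
have rp : 0 < r by rewrite sqrtr_gt0 ltr0n.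
have rr : r ^+ 2 = #|S|%:R by rewrite sqr_sqrtr // ler0n.
have h : forall i, `|x i 0| <= r / 2 * x i 0 ^+ 2 + (2 * r)^-1.
  move=> i; rewrite -(@ler_pM2l _ (2 * r)) ?mulr_gt0 // mulrDr.
  have -> : 2 * r * (2 * r)^-1 = 1 by rewrite mulfV // gt_eqF // mulr_gt0.
  have := sqr_ge0 (r * `|x i 0| - 1); rewrite -[x i 0 ^+ 2]real_normK ?num_real //.
  move: (normr_ge0 (x i 0)); nra.
apply: le_trans (ler_sum _ (fun i _ => h i)) _.
rewrite big_split /= -mulr_sumr sumr_const -[(_^-1) *+ #|S|]mulr_natr -rr.
have -> : (2 * r)^-1 * r ^+ 2 = r / 2 by field; rewrite gt_eqF.
have := ler_wpM2l (divr_ge0 r0 (ler0n _ 2)) ssqS; lra.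
Qed.

End Core3.

Theorem lemma3p10 (R : realType) (d : nat -> nat)
  (Sig : forall n, 'M[R]_(d n))
  (S : forall n, {set 'I_(d n)})
  (lam : nat -> R)
  (w : forall n, 'cV[R]_(d n))
  (c0 : forall n, 'cV[R]_(d n))
  (gs : forall n, 'cV[R]_(d n)) :
  (* covariance of the zero-mean Gaussian vector x_{-1} *)
  (forall n, (Sig n)^T = Sig n) ->
  (forall n, posdef (Sig n)) ->
  (forall n (i : 'I_(d n)), Sig n i i = 1) ->
  bdd_away0 (fun n => mineig (Sig n)) ->
  (forall n, 0 < lam n) ->
  (forall n (i : 'I_(d n)), 0 < w n i 0) ->
  (forall n, normInf (w n) <= 1) ->
  (forall n, is_argmin_c0 (Sig n) (S n) (w n) (lam n) (c0 n)) ->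
  let Q := fun n => lam n ^+ 2 *
      qf (invmx (Sig n)) (diagc (w n) *m zeta (S n) (c0 n)) in
  bdd_away0 (fun n => 1 - (Q n)^-1) ->
  bigO1 Q ->
  (forall n, restr (~: S n) (gs n) = 0) ->
  (forall n, 0 < 1 - (Q n)^-1 - qf (Sig n) (restr (S n) (gs n))) ->
  bdd_away0 (fun n => 1 - (Q n)^-1 - qf (Sig n) (restr (S n) (gs n))) ->
  let g0 := fun n => gamma0 (Sig n) (S n) (gs n) (c0 n) in
  (forall n, is_proj_on (Sig n) (S n) (g0 n) (restr (S n) (gs n))) /\
  (to0 (fun n => lam n * Num.sqrt (#|S n|%:R)) ->
     (* (gs, lam) eligible relative to g0 *)
     ((forall n, normInf (Sig n *m (gs n - g0 n)) <= lam n) /\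
      to0 (fun n => lam n * norm1 (gs n))) /\
     (* g0 allowed *)
     ((forall n, posdef (SigmaG (Sig n) (g0 n))) /\
      bdd_away0 (fun n => mineig (SigmaG (Sig n) (g0 n))) /\
      (forall n, normInf (Sig n *m g0 n) <= 1)) /\
     ~ to0 (fun n => lam n * norm1 (g0 n)) /\
     bdd_away0 (fun n => qf (Sig n) (g0 n - gs n))).
Proof.
move=> sS pd d1 [c1 [c10 Hc1]] lam0 w0 w1 am Q _ [C HC] hgs hpos [c2 [c20 Hc2]] g0.
have k0 n : (0 < d n)%N := k_gt0 (am n).
have hg0 n : g0 n = c0 n + gs n :=
  g0E (sS n) (pd n) (d1 n) (lam0 n) (w0 n) (w1 n) (am n) (hgs n).
pose m := fun n => qf (Sig n) (c0 n).
have hm n : 0 < m n := m_gt0 (pd n) (am n).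
have hQ n : Q n = (m n)^-1 :=
  Q_eq (sS n) (pd n) (d1 n) (lam0 n) (w0 n) (w1 n) (am n).
have hrs n : restr (S n) (gs n) = gs n := gsS (hgs n).
have hgs0 n : 0 <= qf (Sig n) (gs n) := qf_ge0 _ (pd n).
have hpos' n : 0 < 1 - m n - qf (Sig n) (gs n).
  by have := hpos n; rewrite hQ invrK hrs.
have qg0 n : qf (Sig n) (g0 n) = m n + qf (Sig n) (gs n).
  by rewrite hg0 (qf_g0 (sS n) (pd n) (d1 n) (lam0 n) (w0 n) (w1 n) (am n) (hgs n)).
have qg1 n : qf (Sig n) (g0 n) < 1.
  by rewrite qg0; have := hpos' n; have := hgs0 n; lra.
have coer n : forall v, mineig (Sig n) * ssq v <= qf (Sig n) v.
  by have [u [_ [_ h]]] := EL (k0 n) (sS n).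
split.
  by move=> n; exact: proj (S n) (c0 n) (gs n) (sS n) (pd n).
move=> Hto.
split; [split|split; [split; [|split]|split]].
- move=> n; rewrite hg0.
  apply: le_trans (elig_bound _ (sS n) (pd n) (d1 n) (lam0 n) (w0 n) (w1 n) (am n)) _.
  rewrite -[X in _ <= X]mulr1 ler_wpM2l ?ltW //.
  by have := hpos' n; have := hgs0 n; rewrite /m; lra.
- rewrite /to0.
  pose K := (1 + c1^-1) / 2.
  apply: (@squeeze_cvgr _ _ _ _ (fun=> 0) (fun n => K * (lam n * Num.sqrt (#|S n|%:R)))).
  + apply: filterS Hc1 => n hn /=; apply/andP; split.
      by rewrite mulr_ge0 ?norm1_ge0 // ltW.
    have nb := norm1_bound (gs_out (hgs n)).
    have sb : ssq (gs n) <= c1^-1.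
      rewrite -(ler_pM2l c10) mulrV ?unitfE ?gt_eqF //.
      apply: le_trans (ler_wpM2r (ssq_ge0 _) hn) _.
      apply: le_trans (coer n _) _.
      by have := hpos' n; have := hm n; lra.
    have r0 : 0 <= Num.sqrt (#|S n|%:R : R) by exact: (sqrtr_ge0 (#|S n|%:R : R)).
    have := ler_wpM2l (ltW (lam0 n)) nb.
    have := ler_wpM2l (mulr_ge0 (ltW (lam0 n)) r0) sb.
    rewrite /K; move: (lam0 n) r0 (ssq_ge0 (gs n)); nra.
  + exact: cvg_cst.
  + by have := cvgMl_tmp (a := K) Hto; rewrite mulr0; apply.
- by move=> n; exact: (SigG_posdef (sS n) (pd n) (qg1 n)).
- exists (c1 * c2 / 4); split; first by rewrite divr_gt0 // mulr_gt0.
  apply: filterS2 Hc1 Hc2 => n h1 h2.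
  have [u [u1 [<- _]]] := EL (ltn0Sn (d n)) (SigG_sym (g0 n) (sS n)).
  have L0 : 0 < mineig (Sig n) by apply: lt_le_trans h1.
  have L1 := coer_le1 (sS n) (k0 n) (d1 n) (coer n).
  have c2d : c2 <= 1 - qf (Sig n) (g0 n).
    by move: h2; rewrite hQ invrK hrs qg0 opprD addrA.
  have := SigG_lb (sS n) (pd n) L0 L1 (coer n) c20 c2d u; rewrite u1 mulr1.
  have := ler_wpM2r (ltW c20) h1; lra.
- by move=> n; exact: (Sg_bound (sS n) (pd n) (d1 n) (ltW (qg1 n))).
- move/cvgrPdist_lt => /(_ _ ltr01) /filter_ex [n].
  rewrite sub0r normrN hg0.
  have := norm1_g0 (lam0 n) (w0 n) (w1 n) (am n) (hgs n).
  move=> h1 h2; have := ler_norm (lam n * norm1 (c0 n + gs n)); lra.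
- exists (Num.max C 1)^-1; split; first by rewrite invr_gt0 lt_max ltr01 orbT.
  apply: filterS HC => n hn.
  rewrite hg0 addrK -/(m n) -[m n]invrK -hQ.
  have Q0 : 0 < Q n by rewrite hQ invr_gt0.
  rewrite lef_pV2 ?posrE ?lt_max ?ltr01 ?orbT //.
  apply: le_trans (ler_norm _) _; apply: le_trans hn _; by rewrite le_max lexx.
Qed.
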